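(* Let $S$ be a $\Gamma$-hemiring, let $\mu,\nu$ be fuzzy h-ideals of $S$ and let $x,y\in S$. Then $\langle x,\mu\rangle\times\langle y,\nu\rangle$ is a fuzzy h-ideal of the $\Gamma$-hemiring $S\times S$.
   Context: A $\Gamma$-hemiring is a pair of additive commutative semigroups with zero $S$ and $\Gamma$ with a map $S\times\Gamma\times S\to S$, $(a,\alpha,b)\mapsto a\alpha b$, such that for all $a,b,c\in S$, $\alpha,\beta\in\Gamma$: $(a+b)\alpha c=a\alpha c+b\alpha c$; $a\alpha(b+c)=a\alpha b+a\alpha c$; $a(\alpha+\beta)b=a\alpha b+a\beta b$; $a\alpha(b\beta c)=(a\alpha b)\beta c$; $0\alpha a=0=a\alpha0$; $a0b=0=b0a$. $S\times S$ is a $\Gamma$-hemiring with componentwise addition and $(a,b)\gamma(c,d)=(a\gamma c,b\gamma d)$. A fuzzy h-ideal of a $\Gamma$-hemiring $T$ is a map $\mu:T\to[0,1]$, not identically $0$, such that for all $x,y,a,b,z\in T$, $\gamma\in\Gamma$: $\mu(x+y)\ge\min\{\mu(x),\mu(y)\}$; $\mu(x\gamma y)\ge\mu(x)$ and $\mu(x\gamma y)\ge\mu(y)$; $x+a+z=b+z$ implies $\mu(x)\ge\min\{\mu(a),\mu(b)\}$. For fuzzy subsets $\mu,\nu$ of $S$, $(\mu\times\nu)(a,b)=\min\{\mu(a),\nu(b)\}$. The extension of a fuzzy subset $\mu$ of $S$ by $x\in S$ is $\langle x,\mu\rangle(y)=\inf_{s\in S,\ \alpha,\gamma\in\Gamma}\mu(x\alpha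 s\gamma y)$. *)

(* Defs.v *)
From mathcomp Require Import all_boot all_order all_algebra.
From mathcomp Require Import boolp classical_sets reals.
Set Implicit Arguments. Unset Strict Implicit. Unset Printing Implicit Defensive.
Import Order.TTheory GRing.Theory Num.Theory.
Local Open Scope ring_scope.
Local Open Scope classical_set_scope.

Definition is_Gamma_hemiring (S G : nmodType) (op : S -> G -> S -> S) : Prop :=
  (forall (a b c : S) (al : G), op (a + b) al c = op a al c + op b al c) /\
      (forall (a b c : S) (al : G), op a al (b + c) = op a al b + op a al c) /\
      (forall (a b : S) (al be : G), op a (al + be) b = op a al b + op a be b) /\
      (forall (a b c : S) (al be : G), op a al (op b be c) = op (op a al b) be c) /\
      (forall (a : S) (al : G), op 0 al a = 0 /\ op a al 0 = 0) /\
      (forall (a b : S), op a 0 b = 0 /\ op b 0 a = 0).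

Definition prod_op (S G : nmodType) (op : S -> G -> S -> S)
  (p : S * S) (g : G) (q : S * S) : S * S :=
  (op p.1 g q.1, op p.2 g q.2).

Definition fuzzy_h_ideal (R : realType) (T G : nmodType) (op : T -> G -> T -> T)
  (mu : T -> R) : Prop :=
  [/\ (forall x, 0 <= mu x <= 1),
      (exists x, mu x != 0),
      (forall x y, mu (x + y) >= Num.min (mu x) (mu y)),
      (forall x y (g : G), mu (op x g y) >= mu x /\ mu (op x g y) >= mu y) &
      (forall x a b z, x + a + z = b + z -> mu x >= Num.min (mu a) (mu b))].

Definition fuzzy_prod (R : realType) (S : nmodType) (mu nu : S -> R)
  (p : S * S) : R := Num.min (mu p.1) (nu p.2).

Definition extension (R : realType) (S G : nmodType) (op : S -> G -> S -> S)
  (x : S) (mu : S -> R) (y : S) : R :=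
  inf [set r : R | exists (s : S) (al ga : G), r = mu (op (op x al s) ga y)].

(* Main.v *)
Require Import Defs.
From mathcomp Require Import all_boot all_order all_algebra.
From mathcomp Require Import boolp classical_sets reals.
Set Implicit Arguments. Unset Strict Implicit. Unset Printing Implicit Defensive.
Import Order.TTheory GRing.Theory Num.Theory.
Local Open Scope ring_scope.
Local Open Scope classical_set_scope.

Section H.
Variables (R : realType) (S G : nmodType) (op : S -> G -> S -> S) (mu : S -> R) (x : S).
Hypothesis mu01 : forall z, 0 <= mu z <= 1.

Lemma ext_ne a : nonempty [set r : R | exists (s : S) (al ga : G), r = mu (op (op x al s) ga a)].
Proof. by exists (mu (op (op x 0 0) 0 a)); exists 0, 0, 0. Qed.

Lemma ext_ge (k : R) a :
  (forall s al ga, k <= mu (op (op x al s) ga a)) -> k <= extension op x mu a.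
Proof.
move=> H; apply: lb_le_inf; first exact: ext_ne.
by move=> r [s [al [ga ->]]].
Qed.

Lemma ext_le a s al ga : extension op x mu a <= mu (op (op x al s) ga a).
Proof.
apply: (ge_inf (E := [set r : R | exists (s : S) (al ga : G), r = mu (op (op x al s) ga a)])).
  exists 0 => r [s' [al' [ga' ->]]]; by case/andP: (mu01 (op (op x al' s') ga' a)).
by exists s, al, ga.
Qed.

Lemma ext01 a : 0 <= extension op x mu a <= 1.
Proof.
apply/andP; split.
  by apply: ext_ge => s al ga; case/andP: (mu01 (op (op x al s) ga a)).
apply: le_trans (ext_le a 0 0 0) _; by case/andP: (mu01 (op (op x 0 0) 0 a)).
Qed.
End H.

Lemma ext_ideal (R : realType) (S G : nmodType) (op : S -> G -> S -> S)
  (mu : S -> R) (x : S) :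
  is_Gamma_hemiring op -> fuzzy_h_ideal op mu ->
  [/\ (forall z, 0 <= extension op x mu z <= 1),
      0 < extension op x mu 0,
      (forall a b, extension op x mu (a + b) >= Num.min (extension op x mu a) (extension op x mu b)),
      (forall a b (g : G), extension op x mu (op a g b) >= extension op x mu a /\
                            extension op x mu (op a g b) >= extension op x mu b) &
      (forall a c b z, a + c + z = b + z -> extension op x mu a >=
             Num.min (extension op x mu c) (extension op x mu b))].
Proof.
move=> [Dl [Dr [Dg [As [Z0 Zg]]]]] [m01 [w Hw] mD mM mH].
split.
- exact: (ext01 op x m01).
- have E : extension op x mu 0 = mu 0.
    apply/eqP; rewrite eq_le; apply/andP; split.
      by have := ext_le op x m01 0 0 0 0; rewrite (Z0 _ 0).2.
    by apply: ext_ge => s al ga; rewrite (Z0 _ ga).2.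
  rewrite E; have := (mM 0 w 0).2; rewrite (Z0 w 0).1 => h.
  have := m01 w; case/andP => h0 _.
  by apply: lt_le_trans h; rewrite lt_neqAle eq_sym Hw h0.
- move=> a b; apply: ext_ge => s al ga; rewrite Dr.
  apply: le_trans (mD _ _).
  by rewrite le_min !ge_min; apply/andP; split; apply/orP; [left|right]; apply: (ext_le op x m01).
- move=> a b g; split.
    apply: ext_ge => s al ga; rewrite As.
    by apply: le_trans (mM _ _ _).1; apply: (ext_le op x m01).
  apply: ext_ge => s al ga; rewrite As -[op (op x al s) ga a]As.
  exact: (ext_le op x m01).
- move=> a c b z E; apply: ext_ge => s al ga.
  set A := op x al s.
  have h : op A ga a + op A ga c + op A ga z = op A ga b + op A ga z by rewrite -!Dr E.
  apply: le_trans (mH _ _ _ _ h).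
  by rewrite le_min !ge_min; apply/andP; split; apply/orP; [left|right]; apply: (ext_le op x m01).
Qed.

Lemma minmono (R : realType) (a b c d X Y : R) :
  Num.min a c <= X -> Num.min b d <= Y -> Num.min (Num.min a b) (Num.min c d) <= Num.min X Y.
Proof.
move=> h1 h2; rewrite le_min; apply/andP; split.
  apply: le_trans h1; rewrite le_min !ge_min !lexx /= ?orbT //.
apply: le_trans h2; rewrite le_min !ge_min !lexx /= ?orbT //.
Qed.

Theorem theorem3p15 (R : realType) (S G : nmodType) (op : S -> G -> S -> S)
  (mu nu : S -> R) (x y : S) :
  is_Gamma_hemiring op ->
  fuzzy_h_ideal op mu -> fuzzy_h_ideal op nu ->
  fuzzy_h_ideal (prod_op op) (fuzzy_prod (extension op x mu) (extension op y nu)).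
Proof.
move=> hG hm hn.
have [a01 a0 aD aM aH] := ext_ideal x hG hm.
have [b01 b0 bD bM bH] := ext_ideal y hG hn.
rewrite /fuzzy_prod /prod_op; split.
- move=> [p q] /=; have := a01 p; have := b01 q.
  case/andP => ? ?; case/andP => ? ?.
  apply/andP; split; first by rewrite le_min; apply/andP.
  by rewrite ge_min; apply/orP; left.
- exists 0 => /=; by rewrite gt_eqF // lt_min a0 b0.
- move=> [p1 p2] [q1 q2] /=; exact: minmono.
- move=> [p1 p2] [q1 q2] g /=; split; rewrite le_min !ge_min.
  + by rewrite (aM p1 q1 g).1 (bM p2 q2 g).1 orbT.
  + by rewrite (aM p1 q1 g).2 (bM p2 q2 g).2 orbT.
- move=> [p1 p2] [c1 c2] [b1 b2] [z1 z2] /= E.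
  have E1 : p1 + c1 + z1 = b1 + z1 by move: E => [].
  have E2 : p2 + c2 + z2 = b2 + z2 by move: E => [].
  exact: minmono (aH _ _ _ _ E1) (bH _ _ _ _ E2).
Qed.
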